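(* Let $(X,d)$ be a compact metric space and let $(X,f)$ be a flow or a semiflow on $X$ that has the weak reparametrized gluing orbit property. Then either $(X,f)$ is minimal, or $(X,f)$ has positive topological entropy, i.e. $h(f)>0$.
   Context: A flow (resp. semiflow) on $X$ is a continuous family $\{f^t\}$ of continuous maps $X\to X$ indexed by $t\in\mathbb{R}$ (resp. $t\in[0,\infty)$) with $f^0=\mathrm{id}$ and $f^{t+s}=f^t\circ f^s$. $(X,f)$ is minimal if for every $x\in X$ the forward orbit $\{f^t(x):t\ge 0\}$ is dense in $X$. $h(f)$ denotes the topological entropy of the flow/semiflow (defined via maximal cardinalities of $(t,\epsilon)$-separated sets). For $L\ge 1$, an $L$-reparametrization is a strictly increasing continuous function $\gamma:[0,\infty)\to[0,\infty)$ with $\gamma(0)=0$ and $L^{-1}\le \frac{\gamma(t_1)-\gamma(t_2)}{t_1-t_2}\le L$ for all $t_1\ne t_2$ in $[0,\infty)$. An orbit sequence of rank $k$ is a finite sequence $\mathscr{C}=\{(x_j,m_j)\in X\times[0,\infty):j=1,\dots,k\}$. A gap for it is a $(k-1)$-tuple $\mathscr{g}=\{t_j\in[0,\infty):j=1,\dots,k-1\}$. Given a reparametrization $\gamma$ and $\epsilon>0$, $(\mathscr{C},\mathscr{g},\gamma)$ is $\epsilon$-shadowed by $z\in X$ if for every $j=1,\dots,k$ and every $t\in[0,m_j]$ one has $d(f^{\gamma(s_j+t)}(z),f^t(x_j))<\epsilon$, where $s_1=0$ and $s_j=\sum_{i=1}^{j-1}(m_i+t_i)$ for $j\ge2$. $(X,f)$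 has the weak reparametrized gluing orbit property if for every $\epsilon>0$ there is $M=M(\epsilon)>0$ such that for every orbit sequence $\mathscr{C}$ there exist a gap $\mathscr{g}$ with $\max\mathscr{g}\le M$ and an $M$-reparametrization $\gamma$ such that $(\mathscr{C},\mathscr{g},\gamma)$ is $\epsilon$-shadowed by some point of $X$. *)

(* Defs.v *)
From Stdlib Require Import Reals Lra List.
Open Scope R_scope.

Definition is_metric {X : Type} (d : X -> X -> R) : Prop :=
  (forall x y, 0 <= d x y) /\
  (forall x y, d x y = 0 <-> x = y) /\
  (forall x y, d x y = d y x) /\
  (forall x y z, d x z <= d x y + d y z).

Definition is_open {X : Type} (d : X -> X -> R) (U : X -> Prop) : Prop :=
  forall x, U x -> exists r, 0 < r /\ forall y, d x y < r -> U y.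

Definition compact_metric {X : Type} (d : X -> X -> R) : Prop :=
  forall (I : Type) (U : I -> X -> Prop),
    (forall i, is_open d (U i)) ->
    (forall x, exists i, U i x) ->
    exists l : list I, forall x, exists i, In i l /\ U i x.

(* f t is only meaningful for t >= 0; values at t < 0 are irrelevant. *)
Definition is_semiflow {X : Type} (d : X -> X -> R) (f : R -> X -> X) : Prop :=
  (forall x, f 0 x = x) /\
  (forall t s x, 0 <= t -> 0 <= s -> f (t + s) x = f t (f s x)) /\
  (forall t x, 0 <= t -> forall eps, 0 < eps ->
     exists delta, 0 < delta /\
       forall t' x', 0 <= t' -> Rabs (t' - t) < delta -> d x' x < delta ->
         d (f t' x') (f t x) < eps).

Definition minimal {X : Type} (d : X -> X -> R) (f : R -> X -> X) : Prop :=
  forall x y eps, 0 < eps -> exists t, 0 <= t /\ d (f t x) y < eps.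

Definition separated {X : Type} (d : X -> X -> R) (f : R -> X -> X)
  (t eps : R) (E : list X) : Prop :=
  NoDup E /\
  forall x y, In x E -> In y E -> x <> y ->
    exists s, 0 <= s <= t /\ eps < d (f s x) (f s y).

(* h(f) = sup_{eps>0} limsup_{t->oo} (1/t) log s(t,eps), where s(t,eps) is the
   maximal cardinality of a (t,eps)-separated set.  h(f) > 0 unfolds to:
   for some eps > 0, limsup_{t->oo} (1/t) log s(t,eps) > 0, i.e. there is c > 0
   with s(t,eps) > exp(c t) for arbitrarily large t. *)
Definition positive_entropy {X : Type} (d : X -> X -> R) (f : R -> X -> X) : Prop :=
  exists eps, 0 < eps /\ exists c, 0 < c /\
    forall T, exists t, T <= t /\ 0 < t /\
      exists E, separated d f t eps E /\ exp (c * t) < INR (length E).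

Definition reparametrization (L : R) (gamma : R -> R) : Prop :=
  gamma 0 = 0 /\
  (forall t1 t2, 0 <= t1 -> t1 < t2 -> gamma t1 < gamma t2) /\
  (forall t1 t2, 0 <= t1 -> 0 <= t2 -> t1 <> t2 ->
     / L <= (gamma t1 - gamma t2) / (t1 - t2) <= L) /\
  (forall t, 0 <= t -> 0 <= gamma t).

(* s_1 = 0, s_{j+1} = s_j + m_j + t_j  (0-based indices) *)
Fixpoint shift (m g : nat -> R) (j : nat) : R :=
  match j with
  | O => 0
  | S i => shift m g i + m i + g i
  end.

(* orbit sequence {(x_j, m_j) : j < k}, gap {g_j : j < k-1} *)
Definition shadowed {X : Type} (d : X -> X -> R) (f : R -> X -> X)
  (k : nat) (x : nat -> X) (m g : nat -> R) (gamma : R -> R) (eps : R) (z : X) : Prop :=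
  forall j, (j < k)%nat -> forall t, 0 <= t <= m j ->
    d (f (gamma (shift m g j + t)) z) (f t (x j)) < eps.

Definition weak_reparam_gluing {X : Type} (d : X -> X -> R) (f : R -> X -> X) : Prop :=
  forall eps, 0 < eps -> exists M, 0 < M /\
    forall (k : nat) (x : nat -> X) (m : nat -> R),
      (1 <= k)%nat -> (forall j, (j < k)%nat -> 0 <= m j) ->
      exists (g : nat -> R) (gamma : R -> R) (z : X),
        (forall j, (j + 1 < k)%nat -> 0 <= g j <= M) /\
        reparametrization M gamma /\
        shadowed d f k x m g gamma eps z.

(* Main.v *)
Require Import Defs.
From Stdlib Require Import Reals Lra Lia List Arith ClassicalEpsilon Classical ZArith.
Import Defs.
Open Scope R_scope.

Lemma INR_unb (r : R) : exists n : nat, r < INR n.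
Proof.
  destruct (archimed r) as [H1 _].
  destruct (ZArith_dec.Z_le_gt_dec 0 (up r)) as [Hz|Hz].
  - exists (Z.to_nat (up r)). rewrite INR_IZR_INZ, Z2Nat.id by lia; lra.
  - exists 0%nat. simpl. assert (Hz2 : (up r < 0)%Z) by lia. apply IZR_lt in Hz2. lra.
Qed.

Lemma rep_lip M gamma a b : 0 < M -> reparametrization M gamma -> 0 <= a -> a <= b ->
  (b - a) * / M <= gamma b - gamma a <= M * (b - a).
Proof.
  intros HM [H0 [Hinc [Hr Hpos]]] Ha Hab.
  destruct (Req_dec a b) as [->|Hne].
  { replace (b-b) with 0 by ring. lra. }
  assert (Hu: 0 < b - a) by lra.
  destruct (Hr b a ltac:(lra) Ha ltac:(lra)) as [L U].
  set (r := (gamma b - gamma a) / (b - a)) in *.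
  assert (E: gamma b - gamma a = r * (b - a)) by (unfold r; field; lra).
  rewrite E. split.
  - rewrite Rmult_comm. apply Rmult_le_compat_r; lra.
  - apply Rmult_le_compat_r; lra.
Qed.

Lemma rep_ivt M gamma a b s : 0 < M -> reparametrization M gamma -> 0 <= a -> a <= b ->
  gamma a <= s <= gamma b -> exists u, a <= u <= b /\ gamma u = s.
Proof.
  intros HM Hr Ha Hab Hs.
  destruct (Req_dec s (gamma a)) as [E|Na]. { exists a. split; [lra|auto]. }
  destruct (Req_dec s (gamma b)) as [E|Nb]. { exists b. split; [lra|auto]. }
  assert (Hab' : a < b).
  { destruct (Req_dec a b) as [->|]; [lra|lra]. }
  set (h := fun u => gamma (Rmax a u) - s).
  assert (Hlip : forall u v, Rabs (h u - h v) <= M * Rabs (u - v)).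
  { intros u v. unfold h.
    assert (Hm : Rabs (Rmax a u - Rmax a v) <= Rabs (u - v)).
    { unfold Rmax; destruct (Rle_dec a u); destruct (Rle_dec a v);
      unfold Rabs; repeat destruct Rcase_abs; lra. }
    assert (Hg : Rabs (gamma (Rmax a u) - gamma (Rmax a v)) <= M * Rabs (Rmax a u - Rmax a v)).
    { assert (Hau : 0 <= Rmax a u) by (unfold Rmax; destruct Rle_dec; lra).
      assert (Hav : 0 <= Rmax a v) by (unfold Rmax; destruct Rle_dec; lra).
      destruct (Rle_dec (Rmax a u) (Rmax a v)) as [Huv|Huv].
      - pose proof (rep_lip M gamma _ _ HM Hr Hau Huv) as [K1 K].
        pose proof (Rle_trans _ _ _ (proj1 (rep_lip M gamma _ _ HM Hr Hau Huv))
           (proj2 (rep_lip M gamma _ _ HM Hr Hau Huv))).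
        assert (0 <= (Rmax a v - Rmax a u) * / M).
        { apply Rmult_le_pos; [lra|]. left; apply Rinv_0_lt_compat; lra. }
        rewrite (Rabs_left1 (gamma (Rmax a u) - gamma (Rmax a v))) by lra.
        rewrite (Rabs_left1 (Rmax a u - Rmax a v)) by lra. lra.
      - assert (Huv' : Rmax a v <= Rmax a u) by lra.
        pose proof (rep_lip M gamma _ _ HM Hr Hav Huv') as [K1 K].
        assert (0 <= (Rmax a u - Rmax a v) * / M).
        { apply Rmult_le_pos; [lra|]. left; apply Rinv_0_lt_compat; lra. }
        rewrite (Rabs_right (gamma (Rmax a u) - gamma (Rmax a v))) by lra.
        rewrite (Rabs_right (Rmax a u - Rmax a v)) by lra. lra. }
    replace (gamma (Rmax a u) - s - (gamma (Rmax a v) - s))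
      with (gamma (Rmax a u) - gamma (Rmax a v)) by ring.
    eapply Rle_trans; [exact Hg|]. apply Rmult_le_compat_l; lra. }
  assert (Hc : continuity h).
  { intros p. unfold continuity_pt, continue_in, limit1_in, limit_in.
    intros e He. exists (e / M). split.
    { apply Rdiv_lt_0_compat; lra. }
    intros x [_ Hx]. simpl in *. unfold R_dist in *.
    eapply Rle_lt_trans; [apply Hlip|].
    apply (Rmult_lt_compat_l M) in Hx; [|lra].
    replace (M * (e / M)) with e in Hx by (field; lra). exact Hx. }
  assert (ha : h a < 0).
  { unfold h. rewrite Rmax_left by lra. lra. }
  assert (hb : 0 < h b).
  { unfold h. rewrite Rmax_right by lra. lra. }
  destruct (IVT h a b Hc Hab' ha hb) as [u [Hu Hhu]].
  exists u. split; [lra|]. unfold h in Hhu. rewrite Rmax_right in Hhu by lra. lra.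
Qed.

Lemma testbit_high k n i : (k < 2 ^ n)%nat -> (n <= i)%nat -> Nat.testbit k i = false.
Proof.
  intros Hk Hi. pose proof (Nat.testbit_spec' k i) as E.
  rewrite Nat.div_small in E.
  - simpl in E. destruct (Nat.testbit k i); simpl in E; [discriminate|reflexivity].
  - eapply Nat.lt_le_trans; [exact Hk|]. apply Nat.pow_le_mono_r; lia.
Qed.

Lemma least_ex (P : nat -> Prop) i : P i -> exists i0, P i0 /\ (i0 <= i)%nat /\ forall j, (j < i0)%nat -> ~ P j.
Proof.
  induction i as [i IH] using (well_founded_induction Wf_nat.lt_wf).
  intros Hi. destruct (classic (exists j, (j < i)%nat /\ P j)) as [[j [Hj Pj]]|N].
  - destruct (IH j Hj Pj) as [i0 [A [B C]]]. exists i0. split; [auto|split; [lia|auto]].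
  - exists i. split; [auto|split; [lia|]]. intros j Hj Pj. apply N. eauto.
Qed.

Lemma bits_diff k k' n : (k < 2 ^ n)%nat -> (k' < 2 ^ n)%nat -> k <> k' ->
  exists i, (i < n)%nat /\ Nat.testbit k i <> Nat.testbit k' i /\
    forall j, (j < i)%nat -> Nat.testbit k j = Nat.testbit k' j.
Proof.
  intros Hk Hk' Hne.
  assert (Ex : exists i, Nat.testbit k i <> Nat.testbit k' i).
  { apply NNPP. intros N. apply Hne. apply Nat.bits_inj. intros i.
    apply NNPP. intros Ni. apply N. eauto. }
  destruct Ex as [i Hi]. destruct (least_ex (fun i => Nat.testbit k i <> Nat.testbit k' i) i Hi) as [i0 [A [_ C]]].
  exists i0. split; [|split; [auto|]].
  - destruct (Nat.lt_ge_cases i0 n) as [|Hge]; auto.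
    exfalso. apply A. rewrite !(testbit_high _ n) by auto. reflexivity.
  - intros j Hj. destruct (Bool.bool_dec (Nat.testbit k j) (Nat.testbit k' j)); auto.
    exfalso; eapply C; eauto.
Qed.

Lemma Rabs_le_inv' x q : Rabs x <= q -> -q <= x <= q.
Proof. unfold Rabs; destruct Rcase_abs; intros; lra. Qed.

Definition ell (A B : R) (c : bool) : R := if c then B else A.

Lemma comb (tau tau' : nat -> R) (b b' : nat -> bool) (n : nat) (Q loA loB hiA hiB : R)
  (H0 : tau 0%nat = 0) (H0' : tau' 0%nat = 0)
  (Hsp : forall i, (i < n)%nat -> ell loA loB (b i) <= tau (S i) - tau i <= ell hiA hiB (b i))
  (Hsp' : forall i, (i < n)%nat -> ell loA loB (b' i) <= tau' (S i) - tau' i <= ell hiA hiB (b' i))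
  (Q0 : 0 <= Q) (c1 : 2 * Q < loA) (c2 : 2 * Q < loB) (c3 : 2 * Q + hiA < loB)
  (NW : forall i, (i < n)%nat -> ~ (tau' i + Q < tau (S i) < tau' (S i) - Q))
  (NW' : forall i, (i < n)%nat -> ~ (tau i + Q < tau' (S i) < tau (S i) - Q))
  (i0 : nat) (Hi0 : (i0 < n)%nat) (Hd : b i0 <> b' i0) (Ha : forall j, (j < i0)%nat -> b j = b' j) : False.
Proof.
  assert (Cl : forall j, (j <= i0)%nat -> Rabs (tau j - tau' j) <= Q).
  { induction j as [|j IH]; intros Hj.
    - rewrite H0, H0'. rewrite Rminus_0_r, Rabs_R0. auto.
    - specialize (IH ltac:(lia)). assert (Hjn : (j < n)%nat) by lia.
      pose proof (Hsp j Hjn) as S1. pose proof (Hsp' j Hjn) as S2.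
      rewrite <- (Ha j ltac:(lia)) in S2.
      assert (Hlo : 2 * Q < ell loA loB (b j)) by (destruct (b j); simpl; lra).
      pose proof (NW j Hjn). pose proof (NW' j Hjn).
      apply Rabs_le. apply Rabs_le_inv' in IH.
      split; apply Rnot_lt_le; intro; lra. }
  pose proof (Cl i0 (le_n _)) as C. apply Rabs_le_inv' in C.
  pose proof (Hsp i0 Hi0). pose proof (Hsp' i0 Hi0).
  pose proof (NW i0 Hi0). pose proof (NW' i0 Hi0).
  destruct (b i0), (b' i0); simpl in *; try congruence; lra.
Qed.

Definition xs {X : Type} (x0 y0 : X) (j : nat) : X := if Nat.even j then y0 else x0.
Definition ms (A B : R) (b : nat -> bool) (j : nat) : R :=
  if Nat.even j then 0 else ell A B (b (Nat.div2 j)).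

Lemma ev_s i : Nat.even (S (2 * i)) = false.
Proof. replace (S (2 * i)) with (2 * i + 1)%nat by lia. apply Nat.even_odd. Qed.

Lemma ms_even A B b i : ms A B b (2 * i) = 0.
Proof. unfold ms. rewrite Nat.even_even. reflexivity. Qed.
Lemma ms_odd A B b i : ms A B b (S (2 * i)) = ell A B (b i).
Proof. unfold ms. rewrite ev_s, Nat.div2_succ_double. reflexivity. Qed.
Lemma xs_even {X} (x0 y0 : X) i : xs x0 y0 (2 * i) = y0.
Proof. unfold xs. rewrite Nat.even_even. reflexivity. Qed.
Lemma xs_odd {X} (x0 y0 : X) i : xs x0 y0 (S (2 * i)) = x0.
Proof. unfold xs. rewrite ev_s. reflexivity. Qed.

Lemma ell_nonneg A B c : 0 <= A -> 0 <= B -> 0 <= ell A B c.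
Proof. destruct c; simpl; auto. Qed.

Lemma shift_nonneg A B b g N : 0 <= A -> 0 <= B ->
  (forall j, (j < N)%nat -> 0 <= g j) ->
  forall j, (j <= N)%nat -> 0 <= shift (ms A B b) g j.
Proof.
  intros HA HB Hg. induction j; intros Hj; simpl. lra.
  assert (0 <= ms A B b j) by (unfold ms; destruct Nat.even; [lra|apply ell_nonneg; auto]).
  pose proof (IHj ltac:(lia)). pose proof (Hg j ltac:(lia)). lra.
Qed.

Lemma metric_tri {X} (d : X -> X -> R) : is_metric d -> forall x y z, d x z <= d x y + d y z.
Proof. intros [_ [_ [_ H]]]; exact H. Qed.
Lemma metric_sym {X} (d : X -> X -> R) : is_metric d -> forall x y, d x y = d y x.
Proof. intros [_ [_ [H _]]]; exact H. Qed.

Lemma derive_w {X : Type} (d : X -> X -> R) (f : R -> X -> X) (Hd : is_metric d)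
  (Hf0 : forall x, f 0 x = x)
  (x0 y0 : X) (e0 : R) (Hfar : forall t, 0 <= t -> e0 <= d (f t x0) y0)
  (M : R) (HM : 0 < M) (A B : R) (HA : 0 <= A) (HB : 0 <= B) (n : nat) (b : nat -> bool)
  (g : nat -> R) (gamma : R -> R) (z : X)
  (Hg : forall j, (j + 1 < 2 * n + 1)%nat -> 0 <= g j <= M)
  (Hr : reparametrization M gamma)
  (Hs : shadowed d f (2 * n + 1) (xs x0 y0) (ms A B b) g gamma (e0 / 3) z) :
  gamma (shift (ms A B b) g (2 * 0)) = 0 /\
  (forall i, (i < n)%nat ->
     ell (A / M) (B / M) (b i) <= gamma (shift (ms A B b) g (2 * S i)) - gamma (shift (ms A B b) g (2 * i))
       <= ell (M * (A + 2 * M)) (M * (B + 2 * M)) (b i)) /\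
  (forall i, (i <= n)%nat -> d (f (gamma (shift (ms A B b) g (2 * i))) z) y0 < e0 / 3) /\
  (forall i, (i < n)%nat -> forall s,
     gamma (shift (ms A B b) g (2 * i)) + M * M < s < gamma (shift (ms A B b) g (2 * S i)) - M * M ->
     2 * (e0 / 3) < d (f s z) y0).
Proof.
  set (m := ms A B b).
  assert (Hsn : forall j, (j <= 2 * n)%nat -> 0 <= shift m g j).
  { apply shift_nonneg; auto. intros j Hj. apply (Hg j). lia. }
  assert (E1 : forall i, shift m g (S (2 * i)) = shift m g (2 * i) + g (2 * i)%nat).
  { intros i. change (shift m g (S (2 * i))) with (shift m g (2 * i) + m (2 * i)%nat + g (2 * i)%nat).
    unfold m. rewrite ms_even. ring. }
  assert (E2 : forall i, shift m g (2 * S i) = shift m g (S (2 * i)) + ell A B (b i) + g (S (2 * i))).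
  { intros i. replace (2 * S i)%nat with (S (S (2 * i))) by lia.
    change (shift m g (S (S (2 * i)))) with (shift m g (S (2 * i)) + m (S (2 * i)) + g (S (2 * i))).
    unfold m. rewrite ms_odd. reflexivity. }
  split; [|split; [|split]].
  - simpl. destruct Hr as [H _]. exact H.
  - intros i Hi. pose proof (Hg (2 * i)%nat ltac:(lia)). pose proof (Hg (S (2 * i)) ltac:(lia)).
    pose proof (Hsn (2 * i)%nat ltac:(lia)) as Hp.
    rewrite E2, E1.
    set (S0 := shift m g (2 * i)) in *. set (l := ell A B (b i)).
    assert (Hl : 0 <= l) by (apply ell_nonneg; auto).
    assert (Hle : S0 <= S0 + g (2 * i)%nat + l + g (S (2 * i))) by lra.
    pose proof (rep_lip M gamma _ _ HM Hr Hp Hle) as [L U].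
    assert (EL : ell (A / M) (B / M) (b i) = l * / M) by (unfold l; destruct (b i); simpl; reflexivity).
    assert (EU : ell (M * (A + 2 * M)) (M * (B + 2 * M)) (b i) = M * (l + 2 * M))
      by (unfold l; destruct (b i); simpl; reflexivity).
    rewrite EL, EU. split.
    + eapply Rle_trans; [|exact L]. apply Rmult_le_compat_r.
      * left; apply Rinv_0_lt_compat; lra.
      * lra.
    + eapply Rle_trans; [exact U|]. apply Rmult_le_compat_l; lra.
  - intros i Hi. assert (Hj : (2 * i < 2 * n + 1)%nat) by lia.
    pose proof (Hs (2 * i)%nat Hj 0 ltac:(unfold m; rewrite ms_even; lra)) as H.
    rewrite Rplus_0_r, Hf0, xs_even in H. exact H.
  - intros i Hi s Hw.
    pose proof (Hg (2 * i)%nat ltac:(lia)). pose proof (Hg (S (2 * i)) ltac:(lia)).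
    pose proof (Hsn (2 * i)%nat ltac:(lia)) as Hp.
    rewrite E2 in Hw. rewrite E1 in Hw.
    set (S0 := shift m g (2 * i)) in *. set (l := ell A B (b i)) in *.
    assert (Hl : 0 <= l) by (apply ell_nonneg; auto).
    set (a := S0 + g (2 * i)%nat).
    assert (Ha1 : S0 <= a) by (unfold a; lra).
    pose proof (rep_lip M gamma _ _ HM Hr Hp Ha1) as [_ U1].
    assert (Ha2 : 0 <= a + l) by lra.
    assert (Ha3 : a + l <= a + l + g (S (2 * i))) by lra.
    pose proof (rep_lip M gamma _ _ HM Hr Ha2 Ha3) as [_ U2].
    assert (MM1 : M * (a - S0) <= M * M) by (apply Rmult_le_compat_l; unfold a; lra).
    assert (MM2 : M * (a + l + g (S (2 * i)) - (a + l)) <= M * M) by (apply Rmult_le_compat_l; lra).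
    assert (Hga : gamma a <= s) by (fold a in Hw; lra).
    assert (Hgb : s <= gamma (a + l)) by (fold a in Hw; lra).
    destruct (rep_ivt M gamma a (a + l) s HM Hr ltac:(lra) ltac:(lra) (conj Hga Hgb)) as [u [Hu Hgu]].
    assert (Hj : (S (2 * i) < 2 * n + 1)%nat) by lia.
    assert (Ht : 0 <= u - a <= m (S (2 * i))) by (unfold m; rewrite ms_odd; fold l; lra).
    pose proof (Hs (S (2 * i)) Hj (u - a) Ht) as Hsh.
    fold m in Hsh. rewrite E1 in Hsh. fold S0 in Hsh. fold a in Hsh.
    replace (a + (u - a)) with u in Hsh by ring. rewrite Hgu, xs_odd in Hsh.
    pose proof (Hfar (u - a) ltac:(lra)) as F.
    pose proof (metric_tri d Hd (f (u - a) x0) (f s z) y0).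
    rewrite (metric_sym d Hd (f (u - a) x0) (f s z)) in *. lra.
Qed.

Lemma tau_bounds (tau : nat -> R) n H : tau 0%nat = 0 ->
  (forall i, (i < n)%nat -> 0 <= tau (S i) - tau i <= H) ->
  forall j, (j <= n)%nat -> 0 <= tau j <= INR j * H.
Proof.
  intros H0 Hs. induction j; intros Hj.
  - rewrite H0. simpl. lra.
  - pose proof (IHj ltac:(lia)). pose proof (Hs j ltac:(lia)). rewrite S_INR. lra.
Qed.

Theorem theorem1p1 (X : Type) (d : X -> X -> R) (f : R -> X -> X) :
  is_metric d -> compact_metric d -> is_semiflow d f ->
  weak_reparam_gluing d f ->
  minimal d f \/ positive_entropy d f.
Proof.
  intros Hd _ Hf Hglue.
  destruct (classic (minimal d f)) as [Hm|Nm]; [left; exact Hm|right].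
  unfold minimal in Nm.
  destruct (not_all_ex_not _ _ Nm) as [x0 N1].
  destruct (not_all_ex_not _ _ N1) as [y0 N2].
  destruct (not_all_ex_not _ _ N2) as [e0 N3].
  apply imply_to_and in N3. destruct N3 as [He0 N4].
  assert (Hfar : forall t, 0 <= t -> e0 <= d (f t x0) y0).
  { intros t Ht. apply Rnot_lt_le. intro Hlt. apply N4. exists t. auto. }
  assert (Hf0 : forall x, f 0 x = x) by (destruct Hf as [H _]; exact H).
  set (eps := e0 / 3).
  destruct (Hglue eps ltac:(unfold eps; lra)) as [M [HM HG]].
  set (Q := M * M).
  assert (HQ : 0 <= Q) by (unfold Q; nra).
  set (A := (2 * Q + 1) * M).
  assert (HA : 0 <= A) by (unfold A; apply Rmult_le_pos; lra).
  set (hiA := M * (A + 2 * M)).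
  assert (HhiA : 0 <= hiA) by (unfold hiA; apply Rmult_le_pos; lra).
  set (B := A + (2 * Q + hiA + 1) * M).
  assert (HBA : A <= B) by (unfold B; assert (0 <= (2 * Q + hiA + 1) * M) by (apply Rmult_le_pos; lra); lra).
  assert (HB : 0 <= B) by lra.
  set (hiB := M * (B + 2 * M)).
  assert (HhiB : 0 < hiB) by (unfold hiB; apply Rmult_lt_0_compat; lra).
  assert (HhAB : hiA <= hiB) by (unfold hiA, hiB; apply Rmult_le_compat_l; lra).
  assert (EA : A / M = 2 * Q + 1) by (unfold A; field_simplify; [ring|lra]).
  assert (EB : B / M = 2 * Q + 1 + (2 * Q + hiA + 1)) by (unfold B; rewrite Rdiv_plus_distr, EA; field_simplify; [ring|lra]).
  assert (Hln : 0 < ln 2) by (rewrite <- ln_1; apply ln_increasing; lra).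
  exists eps. split; [unfold eps; lra|].
  exists (ln 2 / (2 * hiB)). split; [apply Rdiv_lt_0_compat; lra|].
  intros T. destruct (INR_unb (T / hiB)) as [n0 Hn0].
  set (n := S n0).
  assert (Hn : INR n0 < INR n) by (unfold n; rewrite S_INR; lra).
  assert (Hn1 : 1 <= INR n) by (unfold n; rewrite S_INR; pose proof (pos_INR n0); lra).
  set (t := INR n * hiB).
  exists t. split; [|split].
  { unfold t. assert (T / hiB * hiB = T) by (field; lra).
    assert (T / hiB * hiB <= INR n * hiB) by (apply Rmult_le_compat_r; lra). lra. }
  { unfold t. apply Rmult_lt_0_compat; lra. }
  set (P := fun (k : nat) (z : X) => exists (g : nat -> R) (gamma : R -> R),
        (forall j, (j + 1 < 2 * n + 1)%nat -> 0 <= g j <= M) /\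
        reparametrization M gamma /\
        shadowed d f (2 * n + 1) (xs x0 y0) (ms A B (Nat.testbit k)) g gamma eps z).
  assert (HP : forall k, exists z, P k z).
  { intros k. destruct (HG (2 * n + 1)%nat (xs x0 y0) (ms A B (Nat.testbit k))) as [g [gamma [z [H1 [H2 H3]]]]].
    - lia.
    - intros j _. unfold ms. destruct Nat.even; [lra|apply ell_nonneg; auto].
    - exists z, g, gamma. auto. }
  set (Z := fun k => proj1_sig (constructive_indefinite_description _ (HP k))).
  assert (HZ : forall k, P k (Z k)) by (intros k; exact (proj2_sig (constructive_indefinite_description _ (HP k)))).
  assert (Hsep : forall k k', (k < 2 ^ n)%nat -> (k' < 2 ^ n)%nat -> k <> k' ->
            exists s, 0 <= s <= t /\ eps < d (f s (Z k)) (f s (Z k'))).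
  { intros k k' Hk Hk' Hne. apply NNPP. intros Nsep.
    assert (NS : forall s, 0 <= s <= t -> d (f s (Z k)) (f s (Z k')) <= eps).
    { intros s Hs. apply Rnot_lt_le. intro. apply Nsep. eauto. }
    destruct (HZ k) as [g [gamma [Hg [Hr Hs]]]].
    destruct (HZ k') as [g' [gamma' [Hg' [Hr' Hs']]]].
    destruct (derive_w d f Hd Hf0 x0 y0 e0 Hfar M HM A B HA HB n _ g gamma (Z k) Hg Hr Hs)
      as [T0 [Tsp [Tnear Twin]]].
    destruct (derive_w d f Hd Hf0 x0 y0 e0 Hfar M HM A B HA HB n _ g' gamma' (Z k') Hg' Hr' Hs')
      as [T0' [Tsp' [Tnear' Twin']]].
    set (tau := fun i => gamma (shift (ms A B (Nat.testbit k)) g (2 * i))) in *.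
    set (tau' := fun i => gamma' (shift (ms A B (Nat.testbit k')) g' (2 * i))) in *.
    assert (Hsp0 : forall b, ell (A / M) (B / M) b >= 0 /\ ell (M * (A + 2 * M)) (M * (B + 2 * M)) b <= hiB).
    { intros []; simpl; rewrite ?EA, ?EB; fold hiA hiB; lra. }
    assert (Bd : forall j, (j <= n)%nat -> 0 <= tau j <= t).
    { intros j Hj. pose proof (tau_bounds tau n hiB T0) as TB.
      assert (0 <= tau j <= INR j * hiB).
      { apply TB; auto. intros i Hi. pose proof (Tsp i Hi). pose proof (Hsp0 (Nat.testbit k i)).
        change (gamma (shift (ms A B (Nat.testbit k)) g (2 * S i))) with (tau (S i)) in *.
        change (gamma (shift (ms A B (Nat.testbit k)) g (2 * i))) with (tau i) in *.  lra. }
      assert (INR j * hiB <= t) by (unfold t; apply Rmult_le_compat_r; [lra|apply le_INR; auto]). lra. }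
    assert (Bd' : forall j, (j <= n)%nat -> 0 <= tau' j <= t).
    { intros j Hj. pose proof (tau_bounds tau' n hiB T0') as TB.
      assert (0 <= tau' j <= INR j * hiB).
      { apply TB; auto. intros i Hi. pose proof (Tsp' i Hi). pose proof (Hsp0 (Nat.testbit k' i)).
        change (gamma' (shift (ms A B (Nat.testbit k')) g' (2 * S i))) with (tau' (S i)) in *.
        change (gamma' (shift (ms A B (Nat.testbit k')) g' (2 * i))) with (tau' i) in *. lra. }
      assert (INR j * hiB <= t) by (unfold t; apply Rmult_le_compat_r; [lra|apply le_INR; auto]). lra. }
    destruct (bits_diff k k' n Hk Hk' Hne) as [i0 [Hi0 [Hd0 Ha0]]].
    apply (comb tau tau' (Nat.testbit k) (Nat.testbit k') n Q (A / M) (B / M) hiA hiB T0 T0'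
             Tsp Tsp' HQ) with (i0 := i0); auto.
    - rewrite EA; lra.
    - rewrite EB; lra.
    - rewrite EB; lra.
    - intros i Hi Hw. pose proof (Twin' i Hi (tau (S i)) Hw) as W.
      pose proof (Tnear (S i) Hi) as Nr. pose proof (Bd (S i) Hi) as Bs.
      pose proof (NS (tau (S i)) Bs) as D.
      pose proof (metric_tri d Hd (f (tau (S i)) (Z k')) (f (tau (S i)) (Z k)) y0).
      rewrite (metric_sym d Hd (f (tau (S i)) (Z k')) (f (tau (S i)) (Z k))) in *.
      change (gamma (shift (ms A B (Nat.testbit k)) g (2 * S i))) with (tau (S i)) in *.
      unfold eps in *. lra.
    - intros i Hi Hw. pose proof (Twin i Hi (tau' (S i)) Hw) as W.
      pose proof (Tnear' (S i) Hi) as Nr. pose proof (Bd' (S i) Hi) as Bs.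
      pose proof (NS (tau' (S i)) Bs) as D.
      pose proof (metric_tri d Hd (f (tau' (S i)) (Z k)) (f (tau' (S i)) (Z k')) y0).
      change (gamma' (shift (ms A B (Nat.testbit k')) g' (2 * S i))) with (tau' (S i)) in *.
      unfold eps in *. lra. }
  exists (map Z (seq 0 (2 ^ n))). split.
  - split.
    + apply NoDup_map_NoDup_ForallPairs; [|apply seq_NoDup].
      intros a b Ha Hb Hab. apply in_seq in Ha. apply in_seq in Hb.
      destruct (Nat.eq_dec a b) as [|Hne]; auto. exfalso.
      destruct (Hsep a b ltac:(lia) ltac:(lia) Hne) as [s [_ Hs]].
      rewrite Hab in Hs. destruct Hd as [_ [Hz _]].
      rewrite (proj2 (Hz _ _) eq_refl) in Hs. unfold eps in Hs. lra.
    + intros x y Hx Hy Hxy. apply in_map_iff in Hx as [a [<- Ha]].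
      apply in_map_iff in Hy as [b [<- Hb]]. apply in_seq in Ha. apply in_seq in Hb.
      apply Hsep; try lia. intro E. apply Hxy. rewrite E. reflexivity.
  - rewrite length_map, length_seq, pow_INR. replace (INR 2) with 2 by (simpl; lra).
    rewrite <- Rpower_pow by lra. unfold Rpower.
    apply exp_increasing. unfold t.
    replace (ln 2 / (2 * hiB) * (INR n * hiB)) with (INR n * ln 2 / 2) by (field; lra).
    assert (0 < INR n * ln 2) by (apply Rmult_lt_0_compat; lra). lra.
Qed.
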